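(* Let $S\subseteq\mathbb{Z}^2$. (a) If $S$ is connected, then $R(S)$ is connected or empty. (b) If $E$ is a connected subset of $R(S)$, then $S\cap Q(E)$ is connected.
   Context: The graph $\mathbf{G}$ on $\mathbb{Z}^2$ joins each point $p$ to $p\pm(1,0)$, $p\pm(0,1)$, $p+(-1,1)$, $p+(1,-1)$; a set is connected if it is connected in the subgraph of $\mathbf{G}$ it induces. For $p\in\mathbb{Z}^2$, $Q(p)=\{p,\ p+(1,0),\ p+(0,1)\}$, and $Q(E)=\bigcup_{a\in E}Q(a)$. $R(S)$ is the set of $p$ such that $S$ contains at least two points of $Q(p)$ (Toom's north-east-self majority rule applied to the configuration whose set of $1$'s is $S$). *)

(* Defs.v *)
From Stdlib Require Import ZArith Relations.
Open Scope Z_scope.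

Definition pt := (Z * Z)%type.
Definition zset := pt -> Prop.

Definition adjG (p q : pt) : Prop :=
  let dx := fst q - fst p in
  let dy := snd q - snd p in
  (dx = 1 /\ dy = 0) \/ (dx = -1 /\ dy = 0) \/
  (dx = 0 /\ dy = 1) \/ (dx = 0 /\ dy = -1) \/
  (dx = -1 /\ dy = 1) \/ (dx = 1 /\ dy = -1).

Definition adj_in (A : zset) (p q : pt) : Prop := A p /\ A q /\ adjG p q.

Definition connected (A : zset) : Prop :=
  (exists p, A p) /\
  forall p q, A p -> A q -> clos_refl_trans pt (adj_in A) p q.

Definition empty (A : zset) : Prop := forall p, ~ A p.

Definition Q (p : pt) : zset :=
  fun q => q = p \/ q = (fst p + 1, snd p) \/ q = (fst p, snd p + 1).

Definition QE (E : zset) : zset := fun q => exists a, E a /\ Q a q.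

Definition R (S : zset) : zset :=
  fun p => exists a b, a <> b /\ Q p a /\ Q p b /\ S a /\ S b.

Definition subset (A B : zset) : Prop := forall p, A p -> B p.
Definition inter (A B : zset) : zset := fun p => A p /\ B p.

(* Main.v *)
Require Import Defs.
From Stdlib Require Import ZArith Relations Lia Classical.
Open Scope Z_scope.

Ltac qsolve := unfold Q; simpl;
  first [left; f_equal; lia | right; left; f_equal; lia | right; right; f_equal; lia].

Lemma Rcases : forall S a1 a2, R S (a1,a2) ->
  (S (a1,a2) /\ S (a1+1,a2)) \/ (S (a1,a2) /\ S (a1,a2+1)) \/ (S (a1+1,a2) /\ S (a1,a2+1)).
Proof.
  intros S a1 a2 [x [y [Hne [Hx [Hy [Sx Sy]]]]]].
  unfold Q in *; simpl in *.
  destruct Hx as [->|[->| ->]]; destruct Hy as [->|[->| ->]];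
  first [left; split; assumption | right; left; split; assumption
        | right; right; split; assumption | exfalso; congruence].
Qed.

Lemma L1 : forall p q u, Q p u -> Q q u -> p = q \/ adjG p q.
Proof.
  intros [p1 p2] [q1 q2] [u1 u2] Hp Hq; unfold Q in *; simpl in *.
  destruct Hp as [Hp|[Hp|Hp]]; destruct Hq as [Hq|[Hq|Hq]];
  injection Hp; injection Hq; intros;
  first [left; f_equal; lia | right; unfold adjG; simpl; lia].
Qed.

Lemma L3 : forall a x y, Q a x -> Q a y -> x = y \/ adjG x y.
Proof.
  intros [a1 a2] [x1 x2] [y1 y2] Hp Hq; unfold Q in *; simpl in *.
  destruct Hp as [Hp|[Hp|Hp]]; destruct Hq as [Hq|[Hq|Hq]];
  injection Hp; injection Hq; intros;
  first [left; f_equal; lia | right; unfold adjG; simpl; lia].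
Qed.

Lemma L2 : forall S x y, S x -> S y -> adjG x y ->
  exists t, R S t /\ Q t x /\ Q t y.
Proof.
  intros S [x1 x2] [y1 y2] Sx Sy H; unfold adjG in H; simpl in H.
  assert (Hne : (x1,x2) <> (y1,y2)) by (intro E; injection E; lia).
  destruct H as [[H1 H2]|[[H1 H2]|[[H1 H2]|[[H1 H2]|[[H1 H2]|[H1 H2]]]]]];
  [ exists (x1,x2) | exists (y1,y2) | exists (x1,x2) | exists (y1,y2)
  | exists (y1, x2) | exists (x1, y2) ];
  (split; [exists (x1,x2), (y1,y2); repeat split; try assumption; qsolve
          | split; qsolve]).
Qed.

Lemma L4 : forall S a b, R S a -> R S b -> adjG a b ->
  exists x y, S x /\ S y /\ Q a x /\ Q b y /\ (x = y \/ adjG x y).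
Proof.
  intros S [a1 a2] [b1 b2] Ha Hb H; unfold adjG in H; simpl in H.
  apply Rcases in Ha; apply Rcases in Hb.
  destruct H as [[H1 H2]|[[H1 H2]|[[H1 H2]|[[H1 H2]|[[H1 H2]|[H1 H2]]]]]];
  (assert (E1 : b1 = a1 + (b1 - a1)) by lia; assert (E2 : b2 = a2 + (b2 - a2)) by lia;
   rewrite H1 in E1; rewrite H2 in E2; rewrite E1, E2 in Hb |- *; clear E1 E2 H1 H2);
  destruct Ha as [[? ?]|[[? ?]|[? ?]]]; destruct Hb as [[? ?]|[[? ?]|[? ?]]];
  match goal with
  | Hx : S ?x, Hy : S ?y |- _ =>
      exists x, y; split; [exact Hx|split; [exact Hy| split; [qsolve | split; [qsolve|
        first [left; f_equal; lia | right; unfold adjG; simpl; lia]]]]]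
  end.
Qed.

Lemma partA : forall S u v, clos_refl_trans pt (adj_in S) u v ->
  forall p, R S p -> Q p u ->
  exists q, R S q /\ Q q v /\ clos_refl_trans pt (adj_in (R S)) p q.
Proof.
  intros S u v H; induction H as [u v [Su [Sv A]]| u | u v w _ IH1 _ IH2]; intros p Rp Qp.
  - destruct (L2 S u v Su Sv A) as [t [Rt [Qu Qv]]].
    exists t; split; [assumption|split; [assumption|]].
    destruct (L1 p t u Qp Qu) as [->|Hadj]; [apply rt_refl|].
    apply rt_step; repeat split; assumption.
  - exists p; split; [assumption|split; [assumption|apply rt_refl]].
  - destruct (IH1 p Rp Qp) as [q1 [R1 [Q1 C1]]].
    destruct (IH2 q1 R1 Q1) as [q2 [R2 [Q2 C2]]].
    exists q2; split; [assumption|split; [assumption|]].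
    eapply rt_trans; eassumption.
Qed.

Lemma partB : forall S E, subset E (R S) ->
  forall a b, clos_refl_trans pt (adj_in E) a b -> E a -> E b ->
  forall x y, S x -> Q a x -> S y -> Q b y ->
  clos_refl_trans pt (adj_in (inter S (QE E))) x y.
Proof.
  intros S E Hsub a b H.
  assert (Hcl : forall a x y, E a -> S x -> Q a x -> S y -> Q a y ->
     clos_refl_trans pt (adj_in (inter S (QE E))) x y).
  { intros c x y Ec Sx Qx Sy Qy.
    destruct (L3 c x y Qx Qy) as [->|Hadj]; [apply rt_refl|].
    apply rt_step; split; [split; [assumption| exists c; split; assumption]|].
    split; [split; [assumption| exists c; split; assumption]| assumption]. }
  induction H as [a b [Ea [Eb A]]| a | a b c Hab IH1 Hbc IH2]; intros Ea' Eb' x y Sx Qx Sy Qy.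
  - destruct (L4 S a b (Hsub a Ea) (Hsub b Eb) A) as [x' [y' [Sx' [Sy' [Qx' [Qy' Hxy]]]]]].
    apply rt_trans with x'; [apply (Hcl a); assumption|].
    apply rt_trans with y'; [|apply (Hcl b); assumption].
    destruct Hxy as [->|Hxy]; [apply rt_refl|].
    apply rt_step; split; [split; [assumption| exists a; split; assumption]|].
    split; [split; [assumption| exists b; split; assumption]| assumption].
  - apply (Hcl a); assumption.
  - assert (Eb : E b).
    { apply clos_rt_rt1n in Hbc. destruct Hbc as [|b' c' [Hb _] _]; assumption. }
    destruct (Hsub b Eb) as [z [_ [_ [Qz [_ [Sz _]]]]]].
    apply rt_trans with z; [apply IH1|apply IH2]; assumption.
Qed.

Theorem fact3p1 :
  forall S : zset,
    (connected S -> connected (R S) \/ empty (R S)) /\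
    (forall E : zset, connected E -> subset E (R S) ->
       connected (inter S (QE E))).
Proof.
  intro S; split.
  - intros [_ HS].
    destruct (classic (exists p, R S p)) as [Hex|Hno].
    + left; split; [assumption|].
      intros p q Rp Rq.
      pose proof Rp as Rp0; pose proof Rq as Rq0.
      destruct Rp0 as [u [u' [_ [Qu [_ [Su _]]]]]].
      destruct Rq0 as [v [v' [_ [Qv [_ [Sv _]]]]]].
      destruct (partA S u v (HS u v Su Sv) p Rp Qu) as [q' [Rq' [Qv' C]]].
      apply rt_trans with q'; [assumption|].
      destruct (L1 q' q v Qv' Qv) as [->|Hadj]; [apply rt_refl|].
      apply rt_step; repeat split; assumption.
    + right; intros p Rp; apply Hno; exists p; assumption.
  - intros E [[a Ea] HE] Hsub.
    split.
    + destruct (Hsub a Ea) as [z [_ [_ [Qz [_ [Sz _]]]]]].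
      exists z; split; [assumption| exists a; split; assumption].
    + intros x y [Sx [a' [Ea' Qx]]] [Sy [b' [Eb' Qy]]].
      eapply (partB S E Hsub a' b'); eauto.
Qed.
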